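(* $2^6\rightarrow 167\rightrightarrows 19$: there is an injective isotone map $\varphi:\mathbf 2^6\to F_4^-$ such that $\{\varphi(x)[p_1:=e]: x\in\mathbf 2^6,\ e\in\{0,1\}\}\supseteq F_3^-$. In particular there is an injective isotone map from $\mathbf 2^6$ into $F_4$.
   Context: $F_k$ is the set of monotone Boolean functions of $k$ variables $p_1,\dots,p_k$ (including constants $0,1$), ordered pointwise; $F_k^-=F_k\setminus\{0\}$. For $g\in F_k$ and $e\in\{0,1\}$, $g[p_1:=e]$ is the function of $p_2,\dots,p_k$ obtained by substituting $e$ for $p_1$. $\mathbf 2^i$ is $\{0,1\}^i$ with the coordinatewise order; isotone means order-preserving. Notation: $2^i\rightarrow|F_j^-|\rightrightarrows|F_{j-1}^-|$ means there is an injective isotone $\varphi:\mathbf 2^i\to F_j^-$ such that every element of $F_{j-1}^-$ equals $\varphi(x)[p_1:=e]$ for some $x$, $e$. Here $|F_3^-|=19$, $|F_4^-|=167$. *)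

(* Defs.v *)
From mathcomp Require Import all_boot.
Set Implicit Arguments. Unset Strict Implicit. Unset Printing Implicit Defensive.

(* An assignment to the variables p_1..p_k : index i : 'I_k stands for p_(i+1). *)
Definition assign (k : nat) := {ffun 'I_k -> bool}.
Definition BF (k : nat) := {ffun assign k -> bool}.

Definition vle (k : nat) (x y : assign k) : bool := [forall i, x i ==> y i].

Definition fle (k : nat) (f g : BF k) : bool := [forall x, f x ==> g x].

Definition monotoneBF (k : nat) (f : BF k) : bool :=
  [forall x, forall y, vle x y ==> (f x ==> f y)].

Definition bf0 (k : nat) : BF k := [ffun => false].

Definition inFminus (k : nat) (f : BF k) : bool := monotoneBF f && (f != bf0 k).

(* g[p_1 := e] : substitute e for p_1 (index ord0); the remaining variables
   p_2..p_(k+1) become the variables of the resulting function of k variables. *)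
Definition subst1 (k : nat) (g : BF k.+1) (e : bool) : BF k :=
  [ffun y : assign k =>
     g [ffun i : 'I_k.+1 => if unlift ord0 i is Some j then y j else e]].

(* Main.v *)
Require Import Defs.
From mathcomp Require Import all_boot zify.
Set Implicit Arguments. Unset Strict Implicit. Unset Printing Implicit Defensive.

Definition tl (k : nat) (a : assign k.+1) : assign k := [ffun j => a (lift ord0 j)].
Definition cons_a (k : nat) (b : bool) (t : assign k) : assign k.+1 :=
  [ffun i : 'I_k.+1 => if unlift ord0 i is Some j then t j else b].

Fixpoint code (k : nat) : assign k -> nat :=
  match k return assign k -> nat with
  | 0 => fun _ => 0
  | k'.+1 => fun a => a ord0 + 2 * code (tl a)
  end.

Fixpoint dec (k n : nat) : assign k :=
  match k with
  | 0 => [ffun => false]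
  | k'.+1 => cons_a (odd n) (dec k' n./2)
  end.

Lemma cons_ord0 k b (t : assign k) : cons_a b t ord0 = b.
Proof. by rewrite ffunE unlift_none. Qed.

Lemma cons_lift k b (t : assign k) j : cons_a b t (lift ord0 j) = t j.
Proof. by rewrite ffunE liftK. Qed.

Lemma tl_cons k b (t : assign k) : tl (cons_a b t) = t.
Proof. by apply/ffunP => j; rewrite !ffunE liftK. Qed.

Lemma cons_eta k (a : assign k.+1) : cons_a (a ord0) (tl a) = a.
Proof.
apply/ffunP => i; rewrite ffunE; case: unliftP => [j ->|->] //.
by rewrite ffunE.
Qed.

Lemma code_cons k b (t : assign k) : code (cons_a b t) = b + 2 * code t.
Proof. by rewrite /= cons_ord0 tl_cons. Qed.

Lemma codeK k (a : assign k) : dec k (code a) = a.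
Proof.
elim: k a => [|k IH] a.
  by apply/ffunP => -[m Hm]; exfalso; by rewrite ltn0 in Hm.
rewrite /= mul2n half_bit_double oddD odd_double addbF oddb IH.
exact: cons_eta.
Qed.

Lemma decK k n : n < 2 ^ k -> code (dec k n) = n.
Proof.
elim: k n => [|k IH] n Hn.
  by move: Hn; rewrite expn0 ltnS leqn0 => /eqP ->.
change (code (cons_a (odd n) (dec k n./2)) = n).
rewrite code_cons IH.
  by rewrite mul2n odd_double_half.
by rewrite ltn_half_double -mul2n -expnS.
Qed.

Lemma code_lt k (a : assign k) : code a < 2 ^ k.
Proof.
elim: k a => [|k IH] a //=.
have := IH (tl a); rewrite expnS.
case: (a ord0) => /=; set c := code _; set X := 2 ^ k; move=> H; lia.
Qed.

Lemma decE k n (i : 'I_k) : dec k n i = odd (n %/ 2 ^ i).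
Proof.
elim: k n i => [|k IH] n i; first by case: i => m Hm; exfalso; rewrite ltn0 in Hm.
rewrite /=; case: (unliftP ord0 i) => [j ->|->].
  by rewrite cons_lift IH /= expnS divnMA divn2.
by rewrite cons_ord0 /= expn0 divn1.
Qed.

Lemma vle_cons k b b' (t t' : assign k) :
  vle (cons_a b t) (cons_a b' t') = (b ==> b') && vle t t'.
Proof.
apply/forallP/andP => [H|[H1 /forallP H2] i].
  split; first by have := H ord0; rewrite !cons_ord0.
  by apply/forallP => j; have := H (lift ord0 j); rewrite !cons_lift.
case: (unliftP ord0 i) => [j ->|->]; by rewrite ?cons_lift ?cons_ord0.
Qed.

Fixpoint subk (k m n : nat) : bool :=
  match k with
  | 0 => true
  | k'.+1 => (odd m ==> odd n) && subk k' m./2 n./2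
  end.

Lemma vle_dec k m n : vle (dec k m) (dec k n) = subk k m n.
Proof.
elim: k m n => [|k IH] m n /=.
  by apply/forallP => -[i Hi]; exfalso; by rewrite ltn0 in Hi.
by rewrite vle_cons IH.
Qed.

Lemma allIota n (P : pred nat) : all P (iota 0 n) -> forall m, m < n -> P m.
Proof. by move/allP=> H m Hm; apply: H; rewrite mem_iota. Qed.

Lemma all_assign k (P : assign k -> Prop) :
  (forall n, n < 2 ^ k -> P (dec k n)) -> forall a, P a.
Proof. by move=> H a; rewrite -(codeK a); apply: H; apply: code_lt. Qed.

Definition tbl : seq (seq bool) := [::
  [:: false; false; false; false; false; false; false; false; false; false; false; false; false; false; false; true];
  [:: false; false; false; false; false; false; false; true; false; false; false; false; false; false; false; true];
  [:: false; false; false; false; false; false; false; false; false; false; false; false; false; true; false; true];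
  [:: false; false; false; false; false; false; false; true; false; false; false; false; false; true; false; true];
  [:: false; false; false; false; false; false; false; false; false; false; false; true; false; false; false; true];
  [:: false; false; false; false; false; false; false; true; false; false; false; true; false; false; false; true];
  [:: false; false; false; false; false; false; false; false; false; false; false; true; false; true; false; true];
  [:: false; false; false; false; false; false; false; true; false; false; false; true; false; true; false; true];
  [:: false; false; false; false; false; false; false; false; false; false; false; false; false; false; true; true];
  [:: false; false; false; false; false; false; false; true; false; false; false; true; false; false; true; true];
  [:: false; false; false; false; false; false; false; false; false; false; false; false; false; true; true; true];
  [:: false; false; false; true; false; false; false; true; false; false; false; true; false; true; true; true];
  [:: false; false; false; false; false; false; false; false; false; false; false; true; false; true; true; true];
  [:: false; false; false; false; false; false; false; true; false; false; false; true; true; true; true; true];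
  [:: false; false; false; false; false; false; false; false; false; false; false; true; true; true; true; true];
  [:: false; false; false; true; false; false; false; true; false; false; false; true; true; true; true; true];
  [:: false; false; false; false; false; false; false; true; false; false; false; false; false; false; true; true];
  [:: false; false; false; false; false; false; false; true; false; false; false; false; false; true; true; true];
  [:: false; false; false; false; false; true; false; true; false; false; false; false; false; true; true; true];
  [:: false; false; false; false; false; true; false; true; false; false; false; true; false; true; true; true];
  [:: false; false; false; false; false; false; false; true; false; false; false; true; false; true; true; true];
  [:: false; false; false; false; false; false; false; true; false; false; true; true; false; true; true; true];
  [:: false; false; false; false; false; true; true; true; false; false; false; true; false; true; true; true];
  [:: false; false; false; false; false; true; true; true; false; false; true; true; false; true; true; true];
  [:: false; false; false; false; false; false; true; true; false; false; false; false; false; false; true; true];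
  [:: false; false; false; false; false; false; true; true; false; false; false; true; false; true; true; true];
  [:: false; false; false; false; false; true; true; true; false; false; false; false; false; true; true; true];
  [:: false; false; false; true; false; true; true; true; false; false; false; true; false; true; true; true];
  [:: false; false; false; false; false; false; true; true; false; true; false; true; false; true; true; true];
  [:: false; false; false; false; false; false; true; true; false; true; true; true; true; true; true; true];
  [:: false; false; false; false; false; true; true; true; false; true; false; true; true; true; true; true];
  [:: false; false; true; true; false; true; true; true; false; true; true; true; true; true; true; true];
  [:: false; false; false; false; false; false; false; false; false; false; false; true; false; false; true; true];
  [:: false; false; false; false; false; false; false; true; false; false; true; true; false; false; true; true];
  [:: false; false; false; false; false; false; false; false; false; true; false; true; false; true; true; true];
  [:: false; false; false; false; false; false; false; true; false; true; true; true; false; true; true; true];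
  [:: false; false; false; false; false; false; false; false; false; false; true; true; false; false; true; true];
  [:: false; false; false; false; false; false; true; true; false; false; true; true; false; false; true; true];
  [:: false; false; false; false; false; false; false; false; false; true; true; true; false; true; true; true];
  [:: false; false; false; false; false; false; true; true; false; true; true; true; false; true; true; true];
  [:: false; false; false; false; false; false; false; false; false; false; true; true; false; true; true; true];
  [:: false; false; false; false; false; false; true; true; false; false; true; true; false; true; true; true];
  [:: false; false; false; false; false; false; false; false; false; true; true; true; true; true; true; true];
  [:: false; false; false; true; false; false; true; true; false; true; true; true; true; true; true; true];
  [:: false; false; false; false; false; false; false; false; false; false; true; true; true; true; true; true];
  [:: false; false; false; false; false; false; true; true; false; false; true; true; true; true; true; true];
  [:: false; false; false; false; false; false; false; false; true; true; true; true; true; true; true; true];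
  [:: false; false; false; true; false; false; true; true; true; true; true; true; true; true; true; true];
  [:: false; false; false; true; false; false; false; true; false; false; false; true; false; false; true; true];
  [:: false; false; false; true; false; false; false; true; false; false; true; true; false; true; true; true];
  [:: false; false; false; true; false; true; false; true; false; true; false; true; false; true; true; true];
  [:: false; false; false; true; false; true; false; true; false; true; true; true; false; true; true; true];
  [:: false; false; false; true; false; true; false; true; false; false; true; true; false; true; true; true];
  [:: false; false; false; true; false; true; true; true; false; false; true; true; false; true; true; true];
  [:: false; false; false; true; false; true; true; true; false; true; true; true; false; true; true; true];
  [:: false; false; true; true; false; true; true; true; false; true; true; true; false; true; true; true];
  [:: false; false; false; true; false; false; true; true; false; false; true; true; false; true; true; true];
  [:: false; false; false; true; false; false; true; true; false; true; true; true; false; true; true; true];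
  [:: false; false; false; true; false; true; true; true; false; true; true; true; true; true; true; true];
  [:: false; false; false; true; true; true; true; true; false; true; true; true; true; true; true; true];
  [:: false; false; false; true; false; true; true; true; true; true; true; true; true; true; true; true];
  [:: false; true; false; true; false; true; true; true; true; true; true; true; true; true; true; true];
  [:: false; false; false; true; true; true; true; true; true; true; true; true; true; true; true; true];
  [:: false; true; true; true; true; true; true; true; true; true; true; true; true; true; true; true]].

Definition R (c : nat) : seq bool := nth [::] tbl c.
Definition bt (r m : nat) : bool := odd (r %/ 2 ^ m).

Definition phi (x : assign 6) : BF 4 :=
  [ffun a => nth false (R (code x)) (code a)].

Definition C_inj := all (fun cx => all (fun cy => (cx != cy) ==>
   has (fun m => nth false (R cx) m != nth false (R cy) m) (iota 0 16)) (iota 0 64)) (iota 0 64).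
Lemma C_inj_ok : C_inj. Proof. vm_compute. reflexivity. Qed.

Definition C_mono := all (fun cx => all (fun m => all (fun n => subk 4 m n ==>
   nth false (R cx) m ==> nth false (R cx) n) (iota 0 16)) (iota 0 16)) (iota 0 64).
Lemma C_mono_ok : C_mono. Proof. vm_compute. reflexivity. Qed.

Definition C_top := all (fun cx => nth false (R cx) 15) (iota 0 64).
Lemma C_top_ok : C_top. Proof. vm_compute. reflexivity. Qed.

Definition C_iso := all (fun cx => all (fun cy => subk 6 cx cy ==> all (fun m =>
   nth false (R cx) m ==> nth false (R cy) m) (iota 0 16)) (iota 0 64)) (iota 0 64).
Lemma C_iso_ok : C_iso. Proof. vm_compute. reflexivity. Qed.

Definition C_surj := all (fun r =>
   (all (fun m => all (fun n => subk 3 m n ==> bt r m ==> bt r n) (iota 0 8)) (iota 0 8)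
    && has (fun m => bt r m) (iota 0 8)) ==>
   has (fun cx => has (fun e : bool => all (fun m => nth false (R cx) (e + 2 * m) == bt r m)
      (iota 0 8)) [:: false; true]) (iota 0 64)) (iota 0 256).
Lemma C_surj_ok : C_surj. Proof. vm_compute. reflexivity. Qed.

Lemma mpL (A B G : Prop) : (A -> B) -> A -> (B -> G) -> G.
Proof. by move=> f a g; apply: g; apply: f. Qed.

Lemma subst1E k (g : BF k.+1) e y : subst1 g e y = g (cons_a e y).
Proof. by rewrite ffunE. Qed.

Lemma phi_inj : injective phi.
Proof.
move=> x y E.
case: (eqVneq (code x) (code y)) => [Exy|ne].
  by rewrite -(codeK x) -(codeK y) Exy.
exfalso.
have H1 := allIota C_inj_ok (code_lt x).
have := allIota H1 (code_lt y).
rewrite ne implyTb => /hasP [m]; rewrite mem_iota => /andP [_ Hm].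
have := congr1 (fun f : BF 4 => f (dec 4 m)) E.
by rewrite !ffunE decK // => ->; rewrite eqxx.
Qed.

Lemma phi_in x : inFminus (phi x).
Proof.
apply/andP; split.
  apply/forallP => a; apply/forallP => b; apply/implyP => Hab.
  rewrite !ffunE.
  rewrite -(codeK a) -(codeK b) vle_dec in Hab.
  have H1 := allIota C_mono_ok (code_lt x).
  have H2 := allIota H1 (code_lt a).
  have := allIota H2 (code_lt b).
  by move=> H; rewrite Hab in H.
apply/eqP => E.
have := congr1 (fun f : BF 4 => f (dec 4 15)) E.
by rewrite !ffunE decK // (allIota C_top_ok (code_lt x)).
Qed.

Lemma phi_iso x y : vle x y -> fle (phi x) (phi y).
Proof.
move=> Hxy; rewrite -(codeK x) -(codeK y) vle_dec in Hxy.
apply/forallP => a; rewrite !ffunE.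
have H1 := allIota C_iso_ok (code_lt x).
have := allIota H1 (code_lt y).
by rewrite Hxy implyTb => /allIota /(_ _ (code_lt a)).
Qed.

Lemma phi_surj (h : BF 3) : inFminus h ->
  exists (x : assign 6) (e : bool), subst1 (phi x) e = h.
Proof.
move=> /andP [Hm Hnz].
pose t : assign 8 := [ffun i : 'I_8 => h (dec 3 i)].
pose r := code t.
have Hbt : forall m, m < 8 -> bt r m = h (dec 3 m).
  move=> m Hm8.
  rewrite /bt -(decE r (Ordinal Hm8)) /r codeK /t ffunE //.
have := allIota C_surj_ok (code_lt t) => /implyP H.
apply: (mpL H).
  apply/andP; split.
    apply/allP => m; rewrite mem_iota => /andP [_ Hm8].
    apply/allP => n; rewrite mem_iota => /andP [_ Hn8].
    apply/implyP => S; rewrite -/r (Hbt _ Hm8) (Hbt _ Hn8).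
    rewrite -vle_dec in S.
    by move: Hm => /forallP /(_ (dec 3 m)) /forallP /(_ (dec 3 n)); rewrite S.
  case: (boolP (has _ _)) => // Hn; exfalso.
  move/negP: Hnz; apply; apply/eqP/ffunP => a; rewrite ffunE.
  apply/negbTE; apply: (contra _ Hn) => ha; apply/hasP; exists (code a).
    by rewrite mem_iota add0n (code_lt a).
  by rewrite -/r (Hbt _ (code_lt a)) codeK.
move=> /hasP [cx]; rewrite mem_iota => /andP [_ Hcx] /hasP [e _ Hall].
exists (dec 6 cx), e.
apply/ffunP => y; rewrite subst1E ffunE code_cons decK //.
have := allIota Hall (code_lt y) => /eqP ->.
by rewrite -/r (Hbt _ (code_lt y)) codeK.
Qed.

Theorem mainTheorem10 :
  (exists phi : assign 6 -> BF 4,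
      injective phi
   /\ (forall x, inFminus (phi x))
   /\ (forall x y, vle x y -> fle (phi x) (phi y))
   /\ (forall h : BF 3, inFminus h ->
         exists (x : assign 6) (e : bool), subst1 (phi x) e = h))
  /\
  (exists psi : assign 6 -> BF 4,
      injective psi
   /\ (forall x, monotoneBF (psi x))
   /\ (forall x y, vle x y -> fle (psi x) (psi y))).
Proof.
split.
  exists phi; split; first exact: phi_inj.
  split; first exact: phi_in.
  split; first exact: phi_iso.
  exact: phi_surj.
exists phi; split; first exact: phi_inj.
split; last exact: phi_iso.
by move=> x; case/andP: (phi_in x).
Qed.
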